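(* If $\cos\theta_{\max}>0$, then for every $f\in\mathcal H$ there exists a consistent reconstruction of $f$ (a solution $\hat f$ of $S^\perp T^\perp\hat f=0$, $S\hat f=Sf$); the normal (minimal-norm) consistent reconstruction $\hat f_n$ is unique and satisfies $$\|\hat f_n\|^2\le\|Sf\|^2+\frac{\|S^\perp T^\perp Sf\|^2}{\cos^4\theta_{\max}}.$$
   Context: $\mathcal H$ is a Hilbert space; $\mathcal S,\mathcal T\subseteq\mathcal H$ closed subspaces with orthogonal projectors $S,T$; $S^\perp=I-S$, $T^\perp=I-T$. A consistent reconstruction of $f$ is any $\hat f$ with $S^\perp T^\perp\hat f=0$ and $S\hat f=Sf$. Angles: for closed subspaces $\mathcal F,\mathcal G$ with orthogonal projectors $P_{\mathcal F},P_{\mathcal G}$, $\hat\Theta(\mathcal F,\mathcal G)=\{\arccos\sigma:\ \sigma\ge0,\ \sigma^2\in\Sigma((P_{\mathcal F}P_{\mathcal G})|_{\mathcal F})\}$ ($\Sigma$ = spectrum), $\Theta(\mathcal F,\mathcal G)=\hat\Theta(\mathcal F,\mathcal G)\cap\hat\Theta(\mathcal G,\mathcal F)$, and $\theta_{\max}=\sup(\Theta(\mathcal S,\mathcal T)\setminus\{\pi/2\})$ with $\sup\emptyset=0$. *)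

(* Defs.v *)
From Stdlib Require Import Reals.
Open Scope R_scope.

Record HilbertSpace := {
  hcar :> Type;
  hzero : hcar;
  hadd : hcar -> hcar -> hcar;
  hopp : hcar -> hcar;
  hscal : R -> hcar -> hcar;
  hinner : hcar -> hcar -> R;
  hadd_assoc : forall x y z, hadd x (hadd y z) = hadd (hadd x y) z;
  hadd_comm : forall x y, hadd x y = hadd y x;
  hadd_0 : forall x, hadd x hzero = x;
  hadd_opp : forall x, hadd x (hopp x) = hzero;
  hscal_1 : forall x, hscal 1 x = x;
  hscal_assoc : forall a b x, hscal a (hscal b x) = hscal (a * b) x;
  hscal_distr_l : forall a x y, hscal a (hadd x y) = hadd (hscal a x) (hscal a y);
  hscal_distr_r : forall a b x, hscal (a + b) x = hadd (hscal a x) (hscal b x);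
  hinner_sym : forall x y, hinner x y = hinner y x;
  hinner_add : forall x y z, hinner (hadd x y) z = hinner x z + hinner y z;
  hinner_scal : forall a x y, hinner (hscal a x) y = a * hinner x y;
  hinner_pos : forall x, 0 <= hinner x x;
  hinner_def : forall x, hinner x x = 0 -> x = hzero;
  hcomplete : forall u : nat -> hcar,
    (forall eps, 0 < eps -> exists N, forall m n, (N <= m)%nat -> (N <= n)%nat ->
        sqrt (hinner (hadd (u m) (hopp (u n))) (hadd (u m) (hopp (u n)))) < eps) ->
    exists l, forall eps, 0 < eps -> exists N, forall n, (N <= n)%nat ->
        sqrt (hinner (hadd (u n) (hopp l)) (hadd (u n) (hopp l))) < eps
}.

Arguments hzero {h}.
Arguments hadd {h}.
Arguments hopp {h}.
Arguments hscal {h}.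
Arguments hinner {h}.

Definition hsub {H : HilbertSpace} (x y : H) : H := hadd x (hopp y).
Definition hnorm {H : HilbertSpace} (x : H) : R := sqrt (hinner x x).

Definition closed_subspace {H : HilbertSpace} (M : H -> Prop) : Prop :=
  M hzero /\
  (forall x y, M x -> M y -> M (hadd x y)) /\
  (forall a x, M x -> M (hscal a x)) /\
  (forall (u : nat -> H) (l : H), (forall n, M (u n)) ->
     (forall eps, 0 < eps -> exists N, forall n, (N <= n)%nat -> hnorm (hsub (u n) l) < eps) ->
     M l).

Definition orth_projector {H : HilbertSpace} (M : H -> Prop) (P : H -> H) : Prop :=
  forall x, M (P x) /\ forall y, M y -> hinner (hsub x (P x)) y = 0.

Definition compl {H : HilbertSpace} (P : H -> H) : H -> H := fun x => hsub x (P x).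

Definition invertible_on {H : HilbertSpace} (F : H -> Prop) (B : H -> H) : Prop :=
  exists C : H -> H,
    (forall y, F y -> F (C y)) /\
    (forall x, F x -> C (B x) = x) /\
    (forall y, F y -> B (C y) = y) /\
    (exists K, forall y, F y -> hnorm (C y) <= K * hnorm y).

Definition in_spectrum_on {H : HilbertSpace} (F : H -> Prop) (A : H -> H) (lam : R) : Prop :=
  ~ invertible_on F (fun x => hsub (A x) (hscal lam x)).

Definition Theta_hat {H : HilbertSpace} (F : H -> Prop) (PF PG : H -> H) (theta : R) : Prop :=
  exists sigma, 0 <= sigma /\ in_spectrum_on F (fun x => PF (PG x)) (sigma ^ 2)
                /\ theta = acos sigma.

Definition Theta {H : HilbertSpace} (F G : H -> Prop) (PF PG : H -> H) (theta : R) : Prop :=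
  Theta_hat F PF PG theta /\ Theta_hat G PG PF theta.

(** theta_max = sup (Theta(S,T) \ {pi/2}), with sup of the empty set = 0. *)
Definition is_theta_max {H : HilbertSpace} (Ssp Tsp : H -> Prop) (S T : H -> H) (tm : R) : Prop :=
  let A := fun theta => Theta Ssp Tsp S T theta /\ theta <> PI / 2 in
  ((forall theta, ~ A theta) /\ tm = 0) \/
  ((exists theta, A theta) /\ is_lub A tm).

Definition consistent {H : HilbertSpace} (S T : H -> H) (f fh : H) : Prop :=
  compl S (compl T fh) = hzero /\ S fh = S f.

Definition normal_consistent {H : HilbertSpace} (S T : H -> H) (f fh : H) : Prop :=
  consistent S T f fh /\ forall g, consistent S T f g -> hnorm fh <= hnorm g.

(* Main.v *)
Require Import Defs.
From Stdlib Require Import Reals Lra Lia Psatz Classical.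
Open Scope R_scope.


Lemma inner_zero_l (H : HilbertSpace) (z : H) : hinner hzero z = 0.
Proof.
  assert (E : hinner (hadd (@hzero H) hzero) z = hinner hzero z) by now rewrite hadd_0.
  rewrite hinner_add in E. lra.
Qed.

Lemma inner_opp_l (H : HilbertSpace) (x z : H) : hinner (hopp x) z = - hinner x z.
Proof.
  assert (E : hinner (hadd x (hopp x)) z = hinner hzero z) by now rewrite hadd_opp.
  rewrite hinner_add, inner_zero_l in E. lra.
Qed.

Lemma inner_sub_l (H : HilbertSpace) (x y z : H) : hinner (hsub x y) z = hinner x z - hinner y z.
Proof. unfold hsub. rewrite hinner_add, inner_opp_l. ring. Qed.

Lemma inner_add_r (H : HilbertSpace) (x y z : H) : hinner z (hadd x y) = hinner z x + hinner z y.
Proof. rewrite !(hinner_sym _ z). apply hinner_add. Qed.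
Lemma inner_scal_r (H : HilbertSpace) a (x z : H) : hinner z (hscal a x) = a * hinner z x.
Proof. rewrite !(hinner_sym _ z). apply hinner_scal. Qed.
Lemma inner_opp_r (H : HilbertSpace) (x z : H) : hinner z (hopp x) = - hinner z x.
Proof. rewrite !(hinner_sym _ z). apply inner_opp_l. Qed.
Lemma inner_sub_r (H : HilbertSpace) (x y z : H) : hinner z (hsub x y) = hinner z x - hinner z y.
Proof. rewrite !(hinner_sym _ z). apply inner_sub_l. Qed.
Lemma inner_zero_r (H : HilbertSpace) (z : H) : hinner z hzero = 0.
Proof. rewrite hinner_sym. apply inner_zero_l. Qed.

Ltac inner_simpl := repeat (rewrite ?hinner_add, ?hinner_scal, ?inner_opp_l, ?inner_sub_l, ?inner_zero_l,
   ?inner_add_r, ?inner_scal_r, ?inner_opp_r, ?inner_sub_r, ?inner_zero_r).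

Lemma hext (H : HilbertSpace) (x y : H) : (forall z, hinner x z = hinner y z) -> x = y.
Proof.
  intros E.
  assert (D : hsub x y = hzero).
  { apply hinner_def. rewrite inner_sub_l, (E (hsub x y)). ring. }
  unfold hsub in D.
  rewrite <- (hadd_0 _ y), <- D, hadd_assoc, (hadd_comm _ y x), <- hadd_assoc, hadd_opp, hadd_0.
  reflexivity.
Qed.

Ltac inner_simpl_in E := repeat (rewrite ?hinner_add, ?hinner_scal, ?inner_opp_l, ?inner_sub_l, ?inner_zero_l,
   ?inner_add_r, ?inner_scal_r, ?inner_opp_r, ?inner_sub_r, ?inner_zero_r in E).

Ltac vec_ext := apply hext; intro; inner_simpl; ring.

Lemma sqr_nonneg_inner (H : HilbertSpace) (x : H) : 0 <= hinner x x.
Proof. apply hinner_pos. Qed.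

Lemma quad_cs (a b c : R) : 0 <= a -> (forall t, 0 <= a * t * t + 2 * b * t + c) -> b * b <= a * c.
Proof.
  intros Ha Hq.
  destruct (Req_dec a 0) as [Ha0|Ha0].
  - subst a. destruct (Req_dec b 0) as [Hb|Hb].
    + subst b. specialize (Hq 0). nra.
    + specialize (Hq (- (c + 1) / (2 * b))).
      assert (E : 0 * (- (c + 1) / (2 * b)) * (- (c + 1) / (2 * b)) + 2 * b * (- (c + 1) / (2 * b)) + c = -1)
        by (field; auto). lra.
  - specialize (Hq (- b / a)).
    assert (E : a * (- b / a) * (- b / a) + 2 * b * (- b / a) + c = c - b * b / a) by (field; auto).
    rewrite E in Hq. assert (0 < a) by lra.
    assert (b * b / a <= c) by lra.
    apply Rmult_le_reg_r with (/ a). apply Rinv_0_lt_compat; lra.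
    replace (a * c * / a) with c by (field; lra). unfold Rdiv in *. lra.
Qed.

Lemma cs_inner (H : HilbertSpace) (x y : H) : hinner x y * hinner x y <= hinner x x * hinner y y.
Proof.
  rewrite (Rmult_comm (hinner x x)).
  apply quad_cs. apply hinner_pos.
  intro t. assert (E := hinner_pos _ (hadd x (hscal t y))).
  inner_simpl_in E. rewrite (hinner_sym _ y x) in E. nra.
Qed.

Lemma hnorm_sq (H : HilbertSpace) (x : H) : hnorm x ^ 2 = hinner x x.
Proof. unfold hnorm. apply pow2_sqrt, hinner_pos. Qed.
Lemma hnorm_nonneg (H : HilbertSpace) (x : H) : 0 <= hnorm x.
Proof. apply sqrt_pos. Qed.

Lemma sqrt_le_of_sq (X Y : R) : 0 <= Y -> X <= Y * Y -> sqrt X <= Y.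
Proof.
  intros HY HX. rewrite <- (sqrt_pow2 Y HY). apply sqrt_le_1_alt. simpl. lra.
Qed.

Lemma hnorm_triangle (H : HilbertSpace) (a b : H) : hnorm (hadd a b) <= hnorm a + hnorm b.
Proof.
  unfold hnorm at 1. apply sqrt_le_of_sq.
  - pose proof (hnorm_nonneg _ a); pose proof (hnorm_nonneg _ b); lra.
  - inner_simpl. rewrite (hinner_sym _ b a).
    pose proof (hnorm_sq _ a); pose proof (hnorm_sq _ b).
    pose proof (hnorm_nonneg _ a); pose proof (hnorm_nonneg _ b).
    pose proof (cs_inner _ a b).
    assert (hinner a b <= hnorm a * hnorm b).
    { destruct (Rle_dec (hinner a b) 0). nra.
      apply Rsqr_incr_0_var. unfold Rsqr. simpl in *. nra. nra. }
    simpl in *. nra.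
Qed.

Lemma hsub_split (H : HilbertSpace) (a b c : H) : hsub a c = hadd (hsub a b) (hsub b c).
Proof. vec_ext. Qed.

Lemma hnorm_sub_tri (H : HilbertSpace) (a b c : H) : hnorm (hsub a c) <= hnorm (hsub a b) + hnorm (hsub b c).
Proof. rewrite (hsub_split _ a b c). apply hnorm_triangle. Qed.

Lemma hnorm_sub_sym (H : HilbertSpace) (a b : H) : hnorm (hsub a b) = hnorm (hsub b a).
Proof. unfold hnorm. f_equal. inner_simpl. ring. Qed.

Lemma hnorm_zero_eq (H : HilbertSpace) (a b : H) : hnorm (hsub a b) <= 0 -> a = b.
Proof.
  intro Hn. assert (hnorm (hsub a b) = 0) by (pose proof (hnorm_nonneg _ (hsub a b)); lra).
  assert (E: hinner (hsub a b) (hsub a b) = 0).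
  { rewrite <- hnorm_sq, H0. simpl. ring. }
  apply hinner_def in E. apply hext. intro z.
  assert (hinner (hsub a b) z = 0) by (rewrite E; apply inner_zero_l).
  rewrite inner_sub_l in H1. lra.
Qed.


Lemma proj_orth (H : HilbertSpace) M (P : H -> H) : orth_projector M P ->
  forall x y, M y -> hinner x y = hinner (P x) y.
Proof. intros hP x y Hy. destruct (hP x) as [_ E]. specialize (E y Hy). rewrite inner_sub_l in E. lra. Qed.

Lemma proj_sym (H : HilbertSpace) M (P : H -> H) : orth_projector M P ->
  forall x z, hinner (P x) z = hinner x (P z).
Proof.
  intros hP x z.
  rewrite (proj_orth _ _ _ hP x (P z)) by apply (proj1 (hP z)).
  rewrite (hinner_sym _ (P x) z), (proj_orth _ _ _ hP z (P x)) by apply (proj1 (hP x)).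
  apply hinner_sym.
Qed.

Lemma proj_add (H : HilbertSpace) M (P : H -> H) : orth_projector M P ->
  forall x y, P (hadd x y) = hadd (P x) (P y).
Proof. intros hP x y. apply hext; intro z. rewrite !(proj_sym _ _ _ hP). inner_simpl. rewrite !(proj_sym _ _ _ hP). ring. Qed.
Lemma proj_scal (H : HilbertSpace) M (P : H -> H) : orth_projector M P ->
  forall a x, P (hscal a x) = hscal a (P x).
Proof. intros hP a x. apply hext; intro z. rewrite !(proj_sym _ _ _ hP). inner_simpl. rewrite !(proj_sym _ _ _ hP). ring. Qed.
Lemma proj_sub (H : HilbertSpace) M (P : H -> H) : orth_projector M P ->
  forall x y, P (hsub x y) = hsub (P x) (P y).
Proof. intros hP x y. apply hext; intro z. rewrite !(proj_sym _ _ _ hP). inner_simpl. rewrite !(proj_sym _ _ _ hP). ring. Qed.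



Lemma proj_fix (H : HilbertSpace) M (P : H -> H) : orth_projector M P ->
  forall m, M m -> P m = m.
Proof.
  intros hP m Hm. apply hext. intro z.
  rewrite (proj_sym _ _ _ hP).
  assert (E1 : hinner (hsub m (P m)) (hsub m (P m)) = 0).
  { rewrite inner_sub_r. destruct (hP m) as [HPm Ho]. rewrite (Ho m Hm), (Ho (P m) HPm). ring. }
  apply hinner_def in E1.
  assert (E2 : hinner (hsub m (P m)) z = 0) by (rewrite E1; apply inner_zero_l).
  rewrite inner_sub_l in E2. rewrite <- (proj_sym _ _ _ hP). lra.
Qed.

Lemma proj_idem (H : HilbertSpace) M (P : H -> H) : orth_projector M P -> forall x, P (P x) = P x.
Proof. intros hP x. apply (proj_fix _ _ _ hP), hP. Qed.

Lemma proj_in (H : HilbertSpace) M (P : H -> H) : orth_projector M P -> forall x, P x = x -> M x.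
Proof. intros hP x E. rewrite <- E. apply hP. Qed.

Lemma proj_sq (H : HilbertSpace) M (P : H -> H) : orth_projector M P ->
  forall x, hinner (P x) (P x) = hinner (P x) x.
Proof. intros hP x. rewrite (proj_sym _ _ _ hP), (proj_idem _ _ _ hP). apply hinner_sym. Qed.

Lemma proj_pyth (H : HilbertSpace) M (P : H -> H) : orth_projector M P ->
  forall x, hinner x x = hinner (P x) (P x) + hinner (hsub x (P x)) (hsub x (P x)).
Proof. intros hP x. pose proof (proj_sq _ _ _ hP x). inner_simpl. rewrite (hinner_sym _ x (P x)). lra. Qed.

Lemma proj_contr (H : HilbertSpace) M (P : H -> H) : orth_projector M P ->
  forall x, hinner (P x) (P x) <= hinner x x.
Proof. intros hP x. rewrite (proj_pyth _ _ _ hP x). pose proof (hinner_pos _ (hsub x (P x))). lra. Qed.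

Lemma proj_norm_contr (H : HilbertSpace) M (P : H -> H) : orth_projector M P ->
  forall x, hnorm (P x) <= hnorm x.
Proof. intros hP x. apply sqrt_le_1_alt, (proj_contr _ _ _ hP). Qed.

Lemma geom_tail (H : HilbertSpace) (u : nat -> H) (C q : R) : 0 <= q < 1 -> 
  (forall n, hnorm (hsub (u n) (u (Datatypes.S n))) <= C * q ^ n) ->
  forall n j, hnorm (hsub (u n) (u (n + j)%nat)) <= C * (q ^ n - q ^ (n + j)) / (1 - q).
Proof.
  intros Hq Hu n j. induction j.
  - rewrite Nat.add_0_r. unfold hnorm. inner_simpl.
    replace (hinner (u n) (u n) - hinner (u n) (u n) - (hinner (u n) (u n) - hinner (u n) (u n))) with 0 by ring.
    rewrite sqrt_0. replace (q ^ n - q ^ n) with 0 by ring. unfold Rdiv. lra.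
  - eapply Rle_trans. apply (hnorm_sub_tri _ _ (u (n + j)%nat)).
    replace (n + Datatypes.S j)%nat with (Datatypes.S (n + j)) by lia.
    eapply Rle_trans. apply Rplus_le_compat. apply IHj. apply Hu.
    right. simpl. field. lra.
Qed.

Lemma pow_small (q e : R) : 0 <= q < 1 -> 0 < e -> exists N, forall n, (n >= N)%nat -> q ^ n < e.
Proof.
  intros Hq He. destruct (pow_lt_1_zero q) with e as [N HN]; auto. rewrite Rabs_pos_eq; lra.
  exists N. intros n Hn. specialize (HN n Hn). rewrite Rabs_pos_eq in HN; auto. apply pow_le; lra.
Qed.

Lemma le_geom_zero (x K q : R) : 0 <= q < 1 -> (forall n, x <= K * q ^ n) -> x <= 0.
Proof.
  intros Hq Hx. apply Rle_plus_epsilon. intros e He.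
  destruct (pow_small q (e / (Rabs K + 1)) Hq) as [N HN].
  apply Rdiv_lt_0_compat; auto. pose proof (Rabs_pos K); lra.
  specialize (HN N (le_n N)). specialize (Hx N).
  assert (K * q ^ N <= Rabs K * q ^ N). { apply Rmult_le_compat_r. apply pow_le; lra. apply Rle_abs. }
  assert (Rabs K * q ^ N <= e). 
  { assert (0 <= q ^ N) by (apply pow_le; lra). pose proof (Rabs_pos K).
    apply Rlt_le in HN. apply Rmult_le_compat_l with (r := Rabs K + 1) in HN; [|lra].
    replace ((Rabs K + 1) * (e / (Rabs K + 1))) with e in HN by (field; lra). nra. }
  lra.
Qed.

Lemma geom_limit (H : HilbertSpace) (u : nat -> H) (C q : R) : 0 <= q < 1 -> 0 <= C ->
  (forall n, hnorm (hsub (u n) (u (Datatypes.S n))) <= C * q ^ n) ->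
  exists l, forall n, hnorm (hsub (u n) l) <= C * q ^ n / (1 - q).
Proof.
  intros Hq HC Hu.
  assert (Hb : forall n m, (n <= m)%nat -> hnorm (hsub (u n) (u m)) <= C * q ^ n / (1 - q)).
  { intros n m Hnm. replace m with (n + (m - n))%nat by lia.
    eapply Rle_trans. apply (geom_tail H u C q Hq Hu).
    unfold Rdiv. apply Rmult_le_compat_r. apply Rlt_le, Rinv_0_lt_compat; lra.
    assert (0 <= q ^ (n + (m - n))) by (apply pow_le; lra). nra. }
  destruct (hcomplete H u) as [l Hl].
  { intros e He.
    destruct (pow_small q (e * (1 - q) / (2 * C + 1)) Hq) as [N HN].
    { apply Rdiv_lt_0_compat; nra. }
    exists N. intros m n Hm Hn.
    change (hnorm (hsub (u m) (u n)) < e).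
    eapply Rle_lt_trans. apply (hnorm_sub_tri _ _ (u N)).
    rewrite hnorm_sub_sym.
    pose proof (Hb N m Hm). pose proof (Hb N n Hn).
    specialize (HN N (le_n N)).
    assert (C * q ^ N / (1 - q) < e / 2).
    { assert (0 <= q ^ N) by (apply pow_le; lra).
      apply Rmult_lt_compat_l with (r := 2 * C + 1) in HN; [|lra].
      replace ((2 * C + 1) * (e * (1 - q) / (2 * C + 1))) with (e * (1 - q)) in HN by (field; lra).
      apply Rmult_lt_reg_r with (2 * (1 - q)). lra.
      replace (C * q ^ N / (1 - q) * (2 * (1 - q))) with (2 * C * q ^ N) by (field; lra). nra. }
    lra. }
  exists l. intro n. apply Rle_plus_epsilon. intros e He.
  destruct (Hl e He) as [N HN].
  eapply Rle_trans. apply (hnorm_sub_tri _ _ (u (max n N))).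
  apply Rplus_le_compat. apply Hb. lia. left. apply HN. lia.
Qed.


Definition Aop {H : HilbertSpace} (P Q : H -> H) (x : H) : H := P (Q x).

Definition AE {H : HilbertSpace} (P Q : H -> H) (lam : R) : Prop :=
  forall e, 0 < e -> exists x, P x = x /\
    hinner (hsub (Aop P Q x) (hscal lam x)) (hsub (Aop P Q x) (hscal lam x)) < e * hinner x x.

Lemma A_add (H : HilbertSpace) M N (P Q : H -> H) : orth_projector M P -> orth_projector N Q ->
  forall x y, Aop P Q (hadd x y) = hadd (Aop P Q x) (Aop P Q y).
Proof. intros hP hQ x y. unfold Aop. rewrite (proj_add _ _ _ hQ), (proj_add _ _ _ hP). auto. Qed.
Lemma A_scal (H : HilbertSpace) M N (P Q : H -> H) : orth_projector M P -> orth_projector N Q ->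
  forall a x, Aop P Q (hscal a x) = hscal a (Aop P Q x).
Proof. intros hP hQ a x. unfold Aop. rewrite (proj_scal _ _ _ hQ), (proj_scal _ _ _ hP). auto. Qed.
Lemma A_sub (H : HilbertSpace) M N (P Q : H -> H) : orth_projector M P -> orth_projector N Q ->
  forall x y, Aop P Q (hsub x y) = hsub (Aop P Q x) (Aop P Q y).
Proof. intros hP hQ x y. unfold Aop. rewrite (proj_sub _ _ _ hQ), (proj_sub _ _ _ hP). auto. Qed.
Lemma A_in (H : HilbertSpace) M (P Q : H -> H) : orth_projector M P ->
  forall x, P (Aop P Q x) = Aop P Q x.
Proof. intros hP x. unfold Aop. apply (proj_idem _ _ _ hP). Qed.
Lemma A_sym (H : HilbertSpace) M N (P Q : H -> H) : orth_projector M P -> orth_projector N Q ->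
  forall x z, P x = x -> P z = z -> hinner (Aop P Q x) z = hinner x (Aop P Q z).
Proof.
  intros hP hQ x z Hx Hz. unfold Aop.
  rewrite (proj_sym _ _ _ hP), Hz, (proj_sym _ _ _ hQ).
  rewrite <- (proj_sym _ _ _ hP x (Q z)), Hx. auto.
Qed.
Lemma A_pos (H : HilbertSpace) M N (P Q : H -> H) : orth_projector M P -> orth_projector N Q ->
  forall x, P x = x -> hinner (Aop P Q x) x = hinner (Q x) (Q x).
Proof.
  intros hP hQ x Hx. unfold Aop. rewrite (proj_sym _ _ _ hP), Hx, (proj_sq _ _ _ hQ). auto.
Qed.
Lemma A_contr (H : HilbertSpace) M N (P Q : H -> H) : orth_projector M P -> orth_projector N Q ->
  forall x, P x = x -> hinner (Aop P Q x) (Aop P Q x) <= hinner (Aop P Q x) x.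
Proof.
  intros hP hQ x Hx. rewrite (A_pos _ _ _ _ _ hP hQ x Hx). unfold Aop. apply (proj_contr _ _ _ hP).
Qed.
Lemma A_le (H : HilbertSpace) M N (P Q : H -> H) : orth_projector M P -> orth_projector N Q ->
  forall x, P x = x -> hinner (Aop P Q x) x <= hinner x x.
Proof.
  intros hP hQ x Hx. rewrite (A_pos _ _ _ _ _ hP hQ x Hx). apply (proj_contr _ _ _ hQ).
Qed.
Lemma A_nonneg (H : HilbertSpace) M N (P Q : H -> H) : orth_projector M P -> orth_projector N Q ->
  forall x, P x = x -> 0 <= hinner (Aop P Q x) x.
Proof. intros hP hQ x Hx. rewrite (A_pos _ _ _ _ _ hP hQ x Hx). apply hinner_pos. Qed.
Lemma A_norm_le (H : HilbertSpace) M N (P Q : H -> H) : orth_projector M P -> orth_projector N Q ->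
  forall x, P x = x -> hinner (Aop P Q x) (Aop P Q x) <= hinner x x.
Proof.
  intros hP hQ x Hx. eapply Rle_trans. apply (A_contr _ _ _ _ _ hP hQ x Hx). apply (A_le _ _ _ _ _ hP hQ x Hx).
Qed.

Lemma par_ineq (H : HilbertSpace) (a b : H) : hinner (hadd a b) (hadd a b) <= 2 * hinner a a + 2 * hinner b b.
Proof. pose proof (hinner_pos _ (hsub a b)). inner_simpl. inner_simpl_in H0. rewrite (hinner_sym _ b a) in *. lra. Qed.
Lemma par_ineq' (H : HilbertSpace) (a b : H) : hinner (hsub a b) (hsub a b) <= 2 * hinner a a + 2 * hinner b b.
Proof. pose proof (hinner_pos _ (hadd a b)). inner_simpl. inner_simpl_in H0. rewrite (hinner_sym _ b a) in *. lra. Qed.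


Lemma PT (H : HilbertSpace) M N (P Q : H -> H) (hP : orth_projector M P) (hQ : orth_projector N Q)
  (k : R) (hk : 0 < k <= 1)
  (hG : forall lam, 0 < lam -> AE P Q lam -> k <= lam) :
  forall x, P x = x -> k * hinner (Aop P Q x) x <= hinner (Aop P Q x) (Aop P Q x).
Proof.
  set (A := Aop P Q).
  assert (Aadd := A_add _ _ _ _ _ hP hQ). assert (Ascal := A_scal _ _ _ _ _ hP hQ).
  assert (Asub := A_sub _ _ _ _ _ hP hQ). assert (Ain := A_in _ _ P Q hP).
  assert (Asym := A_sym _ _ _ _ _ hP hQ). assert (Acontr := A_contr _ _ _ _ _ hP hQ).
  assert (Ale := A_le _ _ _ _ _ hP hQ). assert (Anorm := A_norm_le _ _ _ _ _ hP hQ).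
  assert (Anonneg := A_nonneg _ _ _ _ _ hP hQ).
  fold A in Aadd, Ascal, Asub, Ain, Asym, Acontr, Ale, Anorm, Anonneg.
  set (f := fun x => k * hinner (A x) x - hinner (A x) (A x)).
  assert (fscal : forall a x, f (hscal a x) = a * a * f x).
  { intros a x. unfold f. rewrite Ascal. inner_simpl. ring. }
  assert (fzero : forall x, P x = x -> hinner x x = 0 -> f x <= 0).
  { intros x Hx E. pose proof (cs_inner _ (A x) x). rewrite E in H0.
    assert (hinner (A x) x = 0) by nra. unfold f. rewrite H1. pose proof (hinner_pos _ (A x)). lra. }
  assert (Pscal : forall a x, P x = x -> P (hscal a x) = hscal a x).
  { intros a x Hx. rewrite (proj_scal _ _ _ hP), Hx. auto. }
  intros x Hx. apply Rnot_lt_le. intro Hneg.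
  assert (fpos : 0 < f x) by (unfold f; lra).
  set (E := fun r => exists u, P u = u /\ hinner u u = 1 /\ r = f u).
  assert (Hnorm : forall y, P y = y -> 0 < hinner y y ->
     exists u, P u = u /\ hinner u u = 1 /\ f u = f y / hinner y y).
  { intros y Hy Hyy. exists (hscal (/ sqrt (hinner y y)) y). split; [apply Pscal; auto|].
    assert (Hs : sqrt (hinner y y) * sqrt (hinner y y) = hinner y y) by (apply sqrt_sqrt; lra).
    assert (0 < sqrt (hinner y y)) by (apply sqrt_lt_R0; lra).
    set (s := sqrt (hinner y y)) in *.
    split.
    - inner_simpl. rewrite <- Hs. field. lra.
    - rewrite fscal. rewrite <- Hs. field. lra. }
  assert (Hxx : 0 < hinner x x).
  { destruct (Rle_lt_dec (hinner x x) 0) as [h|h]; auto.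
    pose proof (hinner_pos _ x). specialize (fzero x Hx). lra. }
  destruct (completeness E) as [mu [Hub Hlub]].
  { exists k. intros r [u [Hu [Huu ->]]]. unfold f.
    pose proof (Ale u Hu). pose proof (hinner_pos _ (A u)). nra. }
  { destruct (Hnorm x Hx Hxx) as [u [Hu [Huu Hf]]]. exists (f u). exists u; auto. }
  assert (mu_pos : 0 < mu).
  { destruct (Hnorm x Hx Hxx) as [u [Hu [Huu Hf]]].
    assert (E (f u)) by (exists u; auto). apply Hub in H0.
    assert (0 < f x / hinner x x) by (apply Rdiv_lt_0_compat; auto). lra. }
  assert (mu_le : mu <= k * k / 4).
  { apply Hlub. intros r [u [Hu [Huu ->]]]. unfold f.
    pose proof (cs_inner _ (A u) u). rewrite Huu in H0.
    pose proof (Rle_0_sqr (hinner (A u) u - k / 2)). unfold Rsqr in *. nra. }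
  assert (fle : forall y, P y = y -> f y <= mu * hinner y y).
  { intros y Hy. destruct (Rle_lt_dec (hinner y y) 0) as [h|h].
    - pose proof (hinner_pos _ y). assert (hinner y y = 0) by lra.
      specialize (fzero y Hy H1). rewrite H1. lra.
    - destruct (Hnorm y Hy h) as [u [Hu [Huu Hf]]].
      assert (E (f u)) by (exists u; auto). apply Hub in H0. rewrite Hf in H0.
      apply Rmult_le_compat_r with (r := hinner y y) in H0; [|lra].
      replace (f y / hinner y y * hinner y y) with (f y) in H0 by (field; lra). lra. }
  assert (fnear : forall d, 0 < d -> exists u, P u = u /\ hinner u u = 1 /\ mu - d < f u).
  { intros d Hd. apply NNPP. intro Hn.
    assert (mu <= mu - d); [|lra]. apply Hlub. intros r [u [Hu [Huu ->]]].
    apply Rnot_lt_le. intro. apply Hn. exists u. auto. }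
  set (B := fun y => hadd (hsub (A (A y)) (hscal k (A y))) (hscal mu y)).
  assert (Bin : forall y, P y = y -> P (B y) = B y).
  { intros y Hy. unfold B. rewrite (proj_add _ _ _ hP), (proj_sub _ _ _ hP), !(proj_scal _ _ _ hP), !Ain, Hy. auto. }
  assert (Badd : forall y z, B (hadd y z) = hadd (B y) (B z)).
  { intros y z. unfold B. rewrite !Aadd. vec_ext. }
  assert (Bscal : forall a y, B (hscal a y) = hscal a (B y)).
  { intros a y. unfold B. rewrite !Ascal. vec_ext. }
  assert (Bform : forall y, P y = y -> hinner (B y) y = mu * hinner y y - f y).
  { intros y Hy. unfold B, f. inner_simpl. rewrite (Asym (A y) y (Ain y) Hy). ring. }
  assert (Bpsd : forall y, P y = y -> 0 <= hinner (B y) y).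
  { intros y Hy. rewrite Bform by auto. specialize (fle y Hy). lra. }
  assert (Bsym : forall y z, P y = y -> P z = z -> hinner (B y) z = hinner y (B z)).
  { intros y z Hy Hz. unfold B. inner_simpl.
    rewrite (Asym (A y) z (Ain y) Hz), (Asym y (A z) Hy (Ain z)), (Asym y z Hy Hz). ring. }
  assert (Bcs : forall y z, P y = y -> P z = z ->
     hinner (B y) z * hinner (B y) z <= hinner (B y) y * hinner (B z) z).
  { intros y z Hy Hz. rewrite (Rmult_comm (hinner (B y) y)). apply quad_cs. apply Bpsd; auto.
    intro t. assert (Hyz : P (hadd y (hscal t z)) = hadd y (hscal t z)).
    { rewrite (proj_add _ _ _ hP), Pscal, Hy; auto. }
    pose proof (Bpsd _ Hyz). rewrite Badd, Bscal in H0. inner_simpl_in H0.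
    rewrite (Bsym z y Hz Hy) in H0. rewrite (hinner_sym _ z (B y)) in H0. nra. }
  set (K2 := 4 + 4 * (k * k) + 2 * (mu * mu)).
  assert (HK2 : 0 <= K2) by (unfold K2; nra).
  assert (Bbound : forall y, P y = y -> hinner (B y) (B y) <= K2 * hinner y y).
  { intros y Hy. unfold B. eapply Rle_trans. apply par_ineq.
    pose proof (par_ineq' _ (A (A y)) (hscal k (A y))).
    pose proof (Anorm (A y) (Ain y)). pose proof (Anorm y Hy).
    inner_simpl. inner_simpl_in H0. unfold K2.
    pose proof (hinner_pos _ y). pose proof (hinner_pos _ (A y)). nra. }
  assert (Bapprox : forall e, 0 < e -> exists u, P u = u /\ hinner u u = 1 /\ hinner (B u) (B u) < e).
  { intros e He. destruct (fnear (e / (K2 + 1))) as [u [Hu [Huu Hfu]]].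
    { apply Rdiv_lt_0_compat; lra. }
    exists u. split; auto. split; auto.
    set (X := hinner (B u) u). set (Y := hinner (B (B u)) (B u)). set (q := hinner (B u) (B u)).
    assert (HX : 0 <= X < e / (K2 + 1)).
    { unfold X. rewrite Bform by auto. specialize (fle u Hu). rewrite Huu in *. split; lra. }
    assert (HY : 0 <= Y) by (apply Bpsd, Bin; auto).
    assert (Hq : 0 <= q) by apply hinner_pos.
    assert (H1 : q * q <= X * Y).
    { pose proof (Bcs u (B u) Hu (Bin u Hu)). unfold q, X, Y.
      auto. }
    assert (H2 : Y * Y <= K2 * q * q).
    { pose proof (cs_inner _ (B (B u)) (B u)). pose proof (Bbound (B u) (Bin u Hu)). unfold Y, q.
      pose proof (hinner_pos _ (B u)). pose proof (hinner_pos _ (B (B u))). nra. }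
    assert (H3 : q * q <= X * X * K2).
    { destruct (Req_dec q 0) as [h|h]. rewrite h. pose proof (Rle_0_sqr X). unfold Rsqr in *. nra.
      assert (q * q * (q * q) <= X * X * K2 * (q * q)) by nra.
      apply Rmult_le_reg_r with (q * q). nra. lra. }
    assert (H4 : X * X * K2 < e * e).
    { assert (X * X <= (e / (K2 + 1)) * (e / (K2 + 1))) by nra.
      assert ((e / (K2 + 1)) * (e / (K2 + 1)) * K2 < e * e).
      { replace ((e / (K2 + 1)) * (e / (K2 + 1)) * K2) with (e * e * (K2 / ((K2 + 1) * (K2 + 1)))) by (field; lra).
        assert (K2 / ((K2 + 1) * (K2 + 1)) < 1).
        { apply (Rmult_lt_reg_r ((K2 + 1) * (K2 + 1))). nra.
          replace (K2 / ((K2 + 1) * (K2 + 1)) * ((K2 + 1) * (K2 + 1))) with K2 by (field; lra). nra. }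
        assert (0 < e * e) by nra. nra. }
      assert (X * X * K2 <= (e / (K2 + 1)) * (e / (K2 + 1)) * K2) by (apply Rmult_le_compat_r; lra).
      lra. }
    nra. }
  set (d := k * k - 4 * mu).
  assert (Hd : 0 <= d) by (unfold d; lra).
  set (l1 := (k - sqrt d) / 2). set (l2 := (k + sqrt d) / 2).
  assert (Hsd : sqrt d < k).
  { rewrite <- (sqrt_pow2 k) by lra. apply sqrt_lt_1_alt. split; auto. unfold d. simpl. lra. }
  assert (Hsd0 : 0 <= sqrt d) by apply sqrt_pos.
  assert (Hsum : k = l1 + l2) by (unfold l1, l2; field).
  assert (Hprod : mu = l1 * l2).
  { unfold l1, l2. assert (Hs : sqrt d * sqrt d = d) by (apply sqrt_sqrt; auto).
    assert (Ek : (k - sqrt d) / 2 * ((k + sqrt d) / 2) = (k * k - sqrt d * sqrt d) / 4) by field.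
    rewrite Ek, Hs. unfold d. field. }
  assert (Hl1 : 0 < l1) by (unfold l1; lra).
  assert (Hl2 : l2 < k) by (unfold l2; lra).
  assert (Hl12 : l1 <= l2) by (unfold l1, l2; lra).
  assert (nAE2 : ~ AE P Q l2) by (intro Hae; specialize (hG l2 ltac:(lra) Hae); lra).
  assert (AE1 : AE P Q l1).
  { unfold AE in nAE2. apply not_all_ex_not in nAE2. destruct nAE2 as [e0 He0].
    apply imply_to_and in He0. destruct He0 as [He0 Hno].
    intros e He. destruct (Bapprox (e * e0)) as [u [Hu [Huu Hbu]]]. nra.
    set (w := hsub (A u) (hscal l2 u)).
    assert (Hw : P w = w). { unfold w. rewrite (proj_sub _ _ _ hP), Ain, Pscal; auto. }
    exists w. split; auto. fold A.
    assert (Ew : hsub (A w) (hscal l1 w) = B u).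
    { unfold w, B. rewrite Asub, Ascal. rewrite Hsum, Hprod. vec_ext. }
    rewrite Ew.
    assert (e0 * hinner u u <= hinner w w).
    { apply Rnot_lt_le. intro hlt. apply Hno. exists u. split; auto. }
    rewrite Huu in H0. nra. }
  specialize (hG l1 Hl1 AE1). lra.
Qed.


Lemma AE_spec (H : HilbertSpace) M N (P Q : H -> H) (hP : orth_projector M P) (hQ : orth_projector N Q) lam :
  AE P Q lam -> in_spectrum_on M (fun x => P (Q x)) lam.
Proof.
  intros Hae [C [HC1 [HC2 [HC3 [K HK]]]]].
  destruct (Hae (/ (K * K + 1))) as [x [Hx Hr]].
  { apply Rinv_0_lt_compat. nra. }
  set (y := hsub (P (Q x)) (hscal lam x)) in *.
  assert (Hy : M y).
  { apply (proj_in _ _ _ hP). unfold y. rewrite (proj_sub _ _ _ hP), (proj_scal _ _ _ hP), (proj_idem _ _ _ hP), Hx. auto. }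
  assert (Mx : M x) by (apply (proj_in _ _ _ hP); auto).
  specialize (HC2 x Mx). specialize (HK y Hy). fold y in HC2. rewrite HC2 in HK.
  unfold Aop in Hr. fold y in Hr.
  assert (hinner x x <= K * K * hinner y y).
  { rewrite <- (hnorm_sq _ x), <- (hnorm_sq _ y). pose proof (hnorm_nonneg _ x). pose proof (hnorm_nonneg _ y).
    simpl. nra. }
  pose proof (hinner_pos _ y). pose proof (hinner_pos _ x).
  assert (Hkp : 0 < / (K * K + 1)) by (apply Rinv_0_lt_compat; nra).
  assert (0 < hinner x x) by (apply Rnot_le_lt; intro; nra).
  assert (K * K * hinner y y <= K * K * (/ (K * K + 1) * hinner x x)).
  { apply Rmult_le_compat_l. nra. lra. }
  assert (K * K * (/ (K * K + 1) * hinner x x) < hinner x x).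
  { replace (K * K * (/ (K * K + 1) * hinner x x)) with (hinner x x * (K * K / (K * K + 1))) by (field; nra).
    assert (K * K / (K * K + 1) < 1).
    { apply (Rmult_lt_reg_r (K * K + 1)). nra. replace (K * K / (K * K + 1) * (K * K + 1)) with (K * K) by (field; nra). nra. }
    nra. }
  lra.
Qed.

Lemma AE_transfer (H : HilbertSpace) M N (P Q : H -> H) (hP : orth_projector M P) (hQ : orth_projector N Q) lam :
  0 < lam -> AE P Q lam -> AE Q P lam.
Proof.
  intros Hl Hae e He.
  set (dl := Rmin (lam * lam / 4) (e * (lam * lam) / 4)).
  assert (Hll : 0 < lam * lam) by nra.
  assert (Hdl : 0 < dl) by (unfold dl; apply Rmin_pos; apply Rdiv_lt_0_compat; nra).
  destruct (Hae dl Hdl) as [x [Hx Hr]].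
  unfold Aop in *.
  set (r := hsub (P (Q x)) (hscal lam x)) in *.
  exists (Q x). split. apply (proj_idem _ _ _ hQ).
  assert (E : hsub (Q (P (Q x))) (hscal lam (Q x)) = Q r).
  { unfold r. rewrite (proj_sub _ _ _ hQ), (proj_scal _ _ _ hQ). auto. }
  rewrite E.
  pose proof (proj_contr _ _ _ hQ r).
  assert (Ex : hscal lam x = hsub (P (Q x)) r) by (unfold r; vec_ext).
  pose proof (par_ineq' _ (P (Q x)) r). rewrite <- Ex in H1.
  inner_simpl_in H1.
  pose proof (proj_contr _ _ _ hP (Q x)).
  pose proof (Rmin_l (lam * lam / 4) (e * (lam * lam) / 4)). pose proof (Rmin_r (lam * lam / 4) (e * (lam * lam) / 4)).
  fold dl in H3, H4.
  pose proof (hinner_pos _ x). pose proof (hinner_pos _ r).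
  assert (Hxt : lam * lam * hinner x x <= 4 * hinner (Q x) (Q x)).
  { assert (dl * hinner x x <= lam * lam / 4 * hinner x x) by (apply Rmult_le_compat_r; lra). nra. }
  assert (dl * hinner x x <= e * hinner (Q x) (Q x)).
  { assert (dl * hinner x x <= e * (lam * lam) / 4 * hinner x x) by (apply Rmult_le_compat_r; lra). nra. }
  lra.
Qed.

Lemma acos_ge1 x : 1 <= x -> acos x = 0.
Proof. intro h. unfold acos. destruct (Rle_dec x (-1)); [lra|]. destruct (Rle_dec 1 x); lra. Qed.

Lemma G_lemma (H : HilbertSpace) (Ssp Tsp : H -> Prop) (S T : H -> H)
  (hPS : orth_projector Ssp S) (hPT : orth_projector Tsp T)
  (tmax : R) (htmax : is_theta_max Ssp Tsp S T tmax) (hcos : 0 < cos tmax) :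
  forall lam, 0 < lam -> AE S T lam -> cos tmax * cos tmax <= lam.
Proof.
  intros lam Hl Hae.
  set (sg := sqrt lam).
  assert (Hsg : sg ^ 2 = lam) by (apply pow2_sqrt; lra).
  assert (Hsg0 : 0 < sg) by (apply sqrt_lt_R0; lra).
  set (th := acos sg).
  assert (Hth : Theta Ssp Tsp S T th).
  { split; exists sg; repeat split; try lra.
    - rewrite Hsg. apply (AE_spec _ _ _ _ _ hPS hPT); auto.
    - rewrite Hsg. apply (AE_spec _ _ _ _ _ hPT hPS). apply (AE_transfer _ _ _ _ _ hPS hPT); auto. }
  pose proof (COS_bound tmax).
  destruct (Rle_lt_dec 1 sg) as [h1|h1].
  { assert (1 <= lam) by (rewrite <- Hsg; simpl; nra). nra. }
  assert (Hcs : cos th = sg) by (apply cos_acos; lra).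
  assert (Hthb : 0 <= th <= PI) by apply acos_bound.
  assert (Hne : th <> PI / 2) by (intro E; rewrite E, cos_PI2 in Hcs; lra).
  destruct htmax as [[Hemp _] | [_ [Hub Hlub]]].
  { exfalso. apply (Hemp th). split; auto. }
  assert (Hle : th <= tmax) by (apply Hub; split; auto).
  assert (Htm : tmax <= PI / 2).
  { apply Hlub. intros t [[[s [Hs [_ Ht]]] _] Hne'].
    destruct (Rle_lt_dec 1 s) as [h|h].
    - rewrite Ht, acos_ge1 by lra. pose proof PI2_RGT_0. lra.
    - assert (Hct : cos t = s) by (rewrite Ht; apply cos_acos; lra).
      pose proof (acos_bound s) as Hab. rewrite <- Ht in Hab.
      apply Rnot_lt_le. intro hlt. pose proof PI_RGT_0.
      pose proof (cos_decreasing_1 (PI / 2) t ltac:(lra) ltac:(lra) ltac:(lra) ltac:(lra) hlt) as Hd.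
      rewrite cos_PI2 in Hd. lra. }
  assert (cos tmax <= sg).
  { rewrite <- Hcs. destruct (Req_dec th tmax) as [e|e]. rewrite e; lra.
    left. pose proof PI_RGT_0. apply cos_decreasing_1; lra. }
  rewrite <- Hsg. simpl. nra.
Qed.


Lemma contr_lemma (H : HilbertSpace) M N (P Q : H -> H) (hP : orth_projector M P) (hQ : orth_projector N Q)
  (k : R) (hk : 0 < k <= 1)
  (Ppos : forall x, P x = x -> k * hinner (Aop P Q x) x <= hinner (Aop P Q x) (Aop P Q x)) :
  forall u, P u = u ->
  hinner (Aop P Q (hsub u (hscal (1/2) (Aop P Q u)))) (Aop P Q (hsub u (hscal (1/2) (Aop P Q u))))
  <= (1 - k / 2) * (1 - k / 2) * hinner (Aop P Q u) (Aop P Q u).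
Proof.
  intros u Hu.
  set (A := Aop P Q) in *.
  assert (Asub := A_sub _ _ _ _ _ hP hQ). assert (Ascal := A_scal _ _ _ _ _ hP hQ). assert (Ain := A_in _ _ P Q hP).
  assert (Asym := A_sym _ _ _ _ _ hP hQ).
  fold A in Asub, Ascal, Ain, Asym.
  rewrite Asub, Ascal.
  set (y1 := A u). set (y2 := A y1).
  assert (F0 := Ppos u Hu). fold A y1 in F0.
  set (w := hsub y1 (hscal k u)).
  assert (Hw : P w = w) by (unfold w; rewrite (proj_sub _ _ _ hP), (proj_scal _ _ _ hP), Hu; unfold y1; rewrite Ain; auto).
  assert (Ew : A w = hsub y2 (hscal k y1)) by (unfold w; rewrite Asub, Ascal; auto).
  assert (F1 := A_nonneg _ _ _ _ _ hP hQ w Hw). assert (F2 := A_contr _ _ _ _ _ hP hQ w Hw).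
  fold A in F1, F2. rewrite Ew in F1, F2. unfold w in F1, F2.
  assert (S1 : hinner y2 u = hinner y1 y1) by (unfold y2, y1; apply Asym; auto).
  inner_simpl. inner_simpl_in F1. inner_simpl_in F2.
  rewrite ?(hinner_sym _ u y1), ?(hinner_sym _ u y2), ?(hinner_sym _ y1 y2), ?S1 in *.
  set (X := hinner y2 y1 - k * hinner y1 y1 - k * (hinner y1 y1 - k * hinner y1 u)) in *.
  pose proof (Rmult_le_pos (3 - 2 * k) _ ltac:(lra) F1).
  pose proof (Rmult_le_pos (2 * k - k * k) (hinner y1 y1 - k * hinner y1 u) ltac:(nra) ltac:(lra)).
  unfold X in *. lra.
Qed.

Lemma bound_lemma (H : HilbertSpace) M N (P Q : H -> H) (hP : orth_projector M P) (hQ : orth_projector N Q)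
  (k : R) (hk : 0 < k <= 1)
  (Ppos : forall x, P x = x -> k * hinner (Aop P Q x) x <= hinner (Aop P Q x) (Aop P Q x)) :
  forall y, P y = y ->
  k * k * (hinner (Aop P Q y) y - hinner (Aop P Q y) (Aop P Q y)) <=
  hinner (Aop P Q (Aop P Q y)) (Aop P Q y) - hinner (Aop P Q (Aop P Q y)) (Aop P Q (Aop P Q y)).
Proof.
  intros u Hu.
  set (A := Aop P Q) in *.
  assert (Asub := A_sub _ _ _ _ _ hP hQ). assert (Ascal := A_scal _ _ _ _ _ hP hQ). assert (Ain := A_in _ _ P Q hP).
  assert (Asym := A_sym _ _ _ _ _ hP hQ).
  fold A in Asub, Ascal, Ain, Asym.
  set (y1 := A u). set (y2 := A y1).
  assert (S1 : hinner y2 u = hinner y1 y1) by (unfold y2, y1; apply Asym; auto).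
  set (w := hsub u y1).
  assert (Hw : P w = w) by (unfold w; rewrite (proj_sub _ _ _ hP), Hu; unfold y1; rewrite Ain; auto).
  assert (Ew : A w = hsub y1 y2) by (unfold w; rewrite Asub; auto).
  assert (F1 := Ppos w Hw). fold A in F1. rewrite Ew in F1. unfold w in F1.
  set (z := hsub y1 (hscal k u)).
  assert (Hz : P z = z) by (unfold z; rewrite (proj_sub _ _ _ hP), (proj_scal _ _ _ hP), Hu; unfold y1; rewrite Ain; auto).
  assert (Ez : A z = hsub y2 (hscal k y1)) by (unfold z; rewrite Asub, Ascal; auto).
  assert (F2 := A_contr _ _ _ _ _ hP hQ z Hz). fold A in F2. rewrite Ez in F2. unfold z in F2.
  assert (F3 := A_contr _ _ _ _ _ hP hQ y1 ltac:(apply Ain)). fold A y2 in F3.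
  assert (F4 := Ppos u Hu). fold A y1 in F4.
  inner_simpl_in F1. inner_simpl_in F2.
  rewrite ?(hinner_sym _ u y1), ?(hinner_sym _ u y2), ?(hinner_sym _ y1 y2), ?S1 in *.
  destruct (Req_dec k 1) as [e|e].
  - subst k. lra.
  - set (Q1 := hinner (hsub y1 y2) (hsub y1 y2) - k * (hinner y1 u - hinner y1 y1 - (hinner y2 u - hinner y2 y1))) in *.
    assert (Hid : (1 - k) * (hinner y2 y1 - hinner y2 y2 - k * k * (hinner y1 u - hinner y1 y1)) =
       2 * k * (hinner y1 y1 - 2 * hinner y2 y1 + hinner y2 y2 - k * (hinner y1 u - 2 * hinner y1 y1 + hinner y2 y1))
       + (1 + k) * ((hinner y2 y1 - 2 * k * hinner y1 y1 + k * k * hinner y1 u) - (hinner y2 y2 - 2 * k * hinner y2 y1 + k * k * hinner y1 y1)))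
      by ring.
    assert (0 <= hinner y1 y1 - 2 * hinner y2 y1 + hinner y2 y2 - k * (hinner y1 u - 2 * hinner y1 y1 + hinner y2 y1)).
    { unfold Q1 in F1. inner_simpl_in F1. rewrite ?(hinner_sym _ y1 y2) in F1. lra. }
    assert (0 <= (hinner y2 y1 - 2 * k * hinner y1 y1 + k * k * hinner y1 u) - (hinner y2 y2 - 2 * k * hinner y2 y1 + k * k * hinner y1 y1)) by lra.
    assert (0 <= (1 - k) * (hinner y2 y1 - hinner y2 y2 - k * k * (hinner y1 u - hinner y1 y1))) by nra.
    assert (0 < 1 - k) by lra.
    assert (0 <= hinner y2 y1 - hinner y2 y2 - k * k * (hinner y1 u - hinner y1 y1)) by nra.
    lra.
Qed.


Lemma hnorm_scal_pos (H : HilbertSpace) a (x : H) : 0 <= a -> hnorm (hscal a x) = a * hnorm x.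
Proof.
  intro Ha. unfold hnorm. inner_simpl. rewrite <- Rmult_assoc, sqrt_mult_alt by nra.
  rewrite sqrt_square; auto.
Qed.

Fixpoint itD {H : HilbertSpace} (A : H -> H) (s : H) (n : nat) : H :=
  match n with
  | O => s
  | Datatypes.S m => hsub (itD A s m) (hscal (1/2) (A (itD A s m)))
  end.

Fixpoint itY {H : HilbertSpace} (u : nat -> H) (l : H) (n : nat) : H :=
  match n with
  | O => hzero
  | Datatypes.S m => hadd (itY u l m) (hscal (1/2) (hsub (u m) l))
  end.

Lemma hzero_scal (H : HilbertSpace) (x : H) : hzero = hscal 0 x.
Proof. vec_ext. Qed.

Lemma proj_zero (H : HilbertSpace) M (P : H -> H) : orth_projector M P -> P hzero = hzero.
Proof. intro hP. rewrite (hzero_scal _ hzero), (proj_scal _ _ _ hP). vec_ext. Qed.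

Lemma A_norm_all (H : HilbertSpace) M0 N0 (P Q : H -> H) (hP : orth_projector M0 P) (hQ : orth_projector N0 Q) z :
  hnorm (Aop P Q z) <= hnorm z.
Proof. unfold Aop. eapply Rle_trans. apply (proj_norm_contr _ _ _ hP). apply (proj_norm_contr _ _ _ hQ). Qed.

Lemma existence (HS : HilbertSpace) M0 N0 (P Q : HS -> HS) (hP : orth_projector M0 P) (hQ : orth_projector N0 Q)
  (k : R) (hk : 0 < k <= 1)
  (Ppos : forall x, P x = x -> k * hinner (Aop P Q x) x <= hinner (Aop P Q x) (Aop P Q x)) :
  forall s : HS, P s = s -> exists n y, P n = n /\ Aop P Q n = hzero /\ P y = y /\ Aop P Q y = hsub s n.
Proof.
  intros s Hs.
  set (A := Aop P Q) in *.
  assert (Aadd := A_add _ _ _ _ _ hP hQ). assert (Ascal := A_scal _ _ _ _ _ hP hQ).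
  assert (Asub := A_sub _ _ _ _ _ hP hQ). assert (Ain := A_in _ _ P Q hP).
  assert (Anorm := A_norm_all _ _ _ _ _ hP hQ).
  fold A in Aadd, Ascal, Asub, Ain, Anorm.
  set (q := 1 - k / 2). assert (Hq : 0 <= q < 1) by (unfold q; lra).
  set (u := itD A s).
  assert (Hu : forall n, P (u n) = u n).
  { induction n; simpl; auto. unfold u in *; simpl. rewrite (proj_sub _ _ _ hP), (proj_scal _ _ _ hP), Ain, IHn. auto. }
  assert (HAu : forall n, hinner (A (u n)) (A (u n)) <= (q ^ n * q ^ n) * hinner (A s) (A s)).
  { induction n. unfold u; simpl. lra.
    unfold u; simpl. fold (u n). eapply Rle_trans. apply (contr_lemma _ _ _ _ _ hP hQ k hk Ppos); auto.
    fold A. fold q. assert (Hqq : 0 <= q * q) by nra. 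
    replace (q * q ^ n * (q * q ^ n)) with ((q * q) * (q ^ n * q ^ n)) by ring.
    pose proof (Rmult_le_compat_l _ _ _ Hqq IHn). lra. }
  assert (HAu' : forall n, hnorm (A (u n)) <= q ^ n * hnorm (A s)).
  { intro n. unfold hnorm at 1. apply sqrt_le_of_sq.
    apply Rmult_le_pos. apply pow_le; lra. apply hnorm_nonneg.
    rewrite <- (hnorm_sq _ (A s)) in HAu. specialize (HAu n). simpl in HAu. nra. }
  set (C := 1/2 * hnorm (A s)).
  assert (HC : 0 <= C) by (unfold C; pose proof (hnorm_nonneg _ (A s)); lra).
  destruct (geom_limit _ u C q Hq HC) as [l Hl].
  { intro n. unfold u at 2. simpl. fold (u n).
    replace (hsub (u n) (hsub (u n) (hscal (1/2) (A (u n))))) with (hscal (1/2) (A (u n))) by vec_ext.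
    rewrite hnorm_scal_pos by lra. unfold C. specialize (HAu' n). nra. }
  set (K := C / (1 - q)).
  assert (HK : 0 <= K) by (unfold K; apply Rmult_le_pos; [lra | apply Rlt_le, Rinv_0_lt_compat; lra]).
  assert (Hl' : forall n, hnorm (hsub (u n) l) <= K * q ^ n) by (intro n; unfold K; rewrite (Hl n); unfold Rdiv; lra).
  assert (Pl : P l = l).
  { apply hnorm_zero_eq. apply (le_geom_zero _ (2 * K) q Hq). intro n.
    eapply Rle_trans. apply (hnorm_sub_tri _ _ (u n)).
    replace (hsub (P l) (u n)) with (P (hsub l (u n))) by (rewrite (proj_sub _ _ _ hP), Hu; auto).
    eapply Rle_trans. apply Rplus_le_compat. apply (proj_norm_contr _ _ _ hP). apply Rle_refl.
    rewrite hnorm_sub_sym. specialize (Hl' n). lra. }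
  assert (Al : A l = hzero).
  { apply hnorm_zero_eq. apply (le_geom_zero _ (K + hnorm (A s)) q Hq). intro n.
    eapply Rle_trans. apply (hnorm_sub_tri _ _ (A (u n))).
    replace (hsub (A l) (A (u n))) with (A (hsub l (u n))) by (apply Asub).
    replace (hsub (A (u n)) hzero) with (A (u n)) by vec_ext.
    eapply Rle_trans. apply Rplus_le_compat. apply Anorm. apply HAu'.
    rewrite hnorm_sub_sym. specialize (Hl' n). lra. }
  set (v := itY u l).
  assert (Hv : forall n, P (v n) = v n).
  { induction n. apply (proj_zero _ _ _ hP).
    unfold v; simpl. fold (v n). rewrite (proj_add _ _ _ hP), (proj_scal _ _ _ hP), (proj_sub _ _ _ hP), IHn, Hu, Pl. auto. }
  assert (Azero : A hzero = hzero) by (rewrite (hzero_scal _ hzero), Ascal; vec_ext).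
  assert (HAv : forall n, A (v n) = hsub s (u n)).
  { induction n. unfold v, u; simpl. rewrite Azero. vec_ext.
    unfold v; simpl. fold (v n). unfold u; simpl. fold (u n).
    rewrite Aadd, Ascal, Asub, Al, IHn. vec_ext. }
  destruct (geom_limit _ v (1/2 * K) q Hq) as [y Hy].
  { lra. }
  { intro n. unfold v at 2. simpl. fold (v n).
    replace (hsub (v n) (hadd (v n) (hscal (1/2) (hsub (u n) l)))) with (hscal (1/2) (hsub l (u n))) by vec_ext.
    rewrite hnorm_scal_pos by lra. rewrite hnorm_sub_sym. specialize (Hl' n). lra. }
  set (K' := 1/2 * K / (1 - q)).
  assert (HK' : 0 <= K') by (unfold K'; apply Rmult_le_pos; [lra | apply Rlt_le, Rinv_0_lt_compat; lra]).
  assert (Hy' : forall n, hnorm (hsub (v n) y) <= K' * q ^ n) by (intro n; unfold K'; rewrite (Hy n); unfold Rdiv; lra).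
  assert (Py : P y = y).
  { apply hnorm_zero_eq. apply (le_geom_zero _ (2 * K') q Hq). intro n.
    eapply Rle_trans. apply (hnorm_sub_tri _ _ (v n)).
    replace (hsub (P y) (v n)) with (P (hsub y (v n))) by (rewrite (proj_sub _ _ _ hP), Hv; auto).
    eapply Rle_trans. apply Rplus_le_compat. apply (proj_norm_contr _ _ _ hP). apply Rle_refl.
    rewrite hnorm_sub_sym. specialize (Hy' n). lra. }
  assert (Ay : A y = hsub s l).
  { apply hnorm_zero_eq. apply (le_geom_zero _ (K' + K) q Hq). intro n.
    eapply Rle_trans. apply (hnorm_sub_tri _ _ (A (v n))).
    replace (hsub (A y) (A (v n))) with (A (hsub y (v n))) by (apply Asub).
    rewrite HAv.
    replace (hsub (hsub s (u n)) (hsub s l)) with (hsub l (u n)) by vec_ext.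
    eapply Rle_trans. apply Rplus_le_compat. apply Anorm. apply Rle_refl.
    rewrite (hnorm_sub_sym _ y), (hnorm_sub_sym _ l). specialize (Hy' n). specialize (Hl' n). lra. }
  exists l, y. auto.
Qed.


Theorem theorem7 (H : HilbertSpace) (Ssp Tsp : H -> Prop) (S T : H -> H)
  (hS : closed_subspace Ssp) (hT : closed_subspace Tsp)
  (hPS : orth_projector Ssp S) (hPT : orth_projector Tsp T)
  (tmax : R) (htmax : is_theta_max Ssp Tsp S T tmax)
  (hcos : 0 < cos tmax) :
  (forall f : H, exists fh : H, consistent S T f fh) /\
  (forall f : H, exists fn : H,
     normal_consistent S T f fn /\
     (forall g, normal_consistent S T f g -> g = fn) /\
     hnorm fn ^ 2 <= hnorm (S f) ^ 2
                     + hnorm (compl S (compl T (S f))) ^ 2 / cos tmax ^ 4).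
Proof.
  pose proof (COS_bound tmax) as Hcb.
  set (k := cos tmax * cos tmax).
  assert (hk : 0 < k <= 1) by (unfold k; split; nra).
  assert (hG := G_lemma H Ssp Tsp S T hPS hPT tmax htmax hcos). fold k in hG.
  assert (Ppos := PT H Ssp Tsp S T hPS hPT k hk hG).
  assert (Main : forall f : H, exists fn : H,
     normal_consistent S T f fn /\
     (forall g, normal_consistent S T f g -> g = fn) /\
     hnorm fn ^ 2 <= hnorm (S f) ^ 2
                     + hnorm (compl S (compl T (S f))) ^ 2 / cos tmax ^ 4).
  { intro f.
    assert (Hs : S (S f) = S f) by apply (proj_idem _ _ _ hPS).
    destruct (existence H Ssp Tsp S T hPS hPT k hk Ppos (S f) Hs) as [n [y [Pn [An [Py Ay]]]]].
    assert (Tn : T n = hzero).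
    { apply hinner_def. rewrite <- (A_pos _ _ _ _ _ hPS hPT n Pn), An. apply inner_zero_l. }
    unfold Aop in An, Ay.
    set (fh := hadd n (T y)).
    assert (Cons : consistent S T f fh).
    { unfold consistent, compl. split.
      - unfold fh. rewrite (proj_add _ _ _ hPT), Tn, (proj_idem _ _ _ hPT).
        replace (hsub (hadd n (T y)) (hadd hzero (T y))) with n by vec_ext.
        rewrite Pn. vec_ext.
      - unfold fh. rewrite (proj_add _ _ _ hPS), Pn, Ay. vec_ext. }
    assert (Decomp : forall g, consistent S T f g ->
              hinner g g = hinner fh fh + hinner (hsub g fh) (hsub g fh)).
    { intros g [Hg1 Hg2].
      set (h := hsub g fh).
      assert (Sh : S h = hzero).
      { unfold h. rewrite (proj_sub _ _ _ hPS), Hg2, (proj2 Cons). vec_ext. }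
      set (w := hsub h (T h)).
      assert (Ew : hsub w (S w) = hzero).
      { transitivity (hsub (compl S (compl T g)) (compl S (compl T fh))).
        - unfold w, h, compl. rewrite !(proj_sub _ _ _ hPS), !(proj_sub _ _ _ hPT), !(proj_sub _ _ _ hPS). vec_ext.
        - rewrite Hg1, (proj1 Cons). vec_ext. }
      assert (Sw : S w = w).
      { apply hext. intro z. assert (E : hinner (hsub w (S w)) z = 0) by (rewrite Ew; apply inner_zero_l).
        rewrite inner_sub_l in E. lra. }
      assert (ww : hinner w w = 0).
      { assert (E1 : hinner w (T h) = 0) by (unfold w; apply (proj2 (hPT h)), hPT).
        assert (E2 : hinner h w = 0) by (rewrite <- Sw, <- (proj_sym _ _ _ hPS), Sh; apply inner_zero_l).
        unfold w at 1. rewrite inner_sub_l, (hinner_sym _ (T h) w), E1, E2. ring. }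
      apply hinner_def in ww.
      assert (Th : T h = h).
      { apply hext. intro z. assert (E : hinner w z = 0) by (rewrite ww; apply inner_zero_l).
        unfold w in E. rewrite inner_sub_l in E. lra. }
      assert (fhh : hinner fh h = 0).
      { unfold fh. inner_simpl.
        rewrite <- Pn at 1. rewrite (proj_sym _ _ _ hPS), Sh, inner_zero_r.
        rewrite (proj_sym _ _ _ hPT), Th, <- Py, (proj_sym _ _ _ hPS), Sh, inner_zero_r. ring. }
      replace g with (hadd fh h) at 1 2 by (unfold h; vec_ext).
      inner_simpl. rewrite (hinner_sym _ h fh), fhh. ring. }
    exists fh. split; [split|split].
    - exact Cons.
    - intros g Hg. apply sqrt_le_1_alt. rewrite (Decomp g Hg). pose proof (hinner_pos _ (hsub g fh)). lra.
    - intros g [Hg Hmin]. specialize (Hmin fh Cons). pose proof (Decomp g Hg).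
      assert (hinner g g <= hinner fh fh).
      { apply sqrt_le_0; try apply hinner_pos. exact Hmin. }
      apply hnorm_zero_eq. unfold hnorm. rewrite <- sqrt_0. apply sqrt_le_1_alt. lra.
    - rewrite !hnorm_sq.
      assert (Sfe : S f = hadd n (S (T y))) by (rewrite Ay; vec_ext).
      set (z := S (T y)) in *.
      assert (Pz : S z = z) by (unfold z; apply (proj_idem _ _ _ hPS)).
      assert (Cf : compl S (compl T (S f)) = hsub (S (T z)) (T z)).
      { unfold compl. rewrite Sfe. rewrite !(proj_add _ _ _ hPT), Tn, !(proj_sub _ _ _ hPS), !(proj_add _ _ _ hPS), Pn, Pz.
        rewrite ?(proj_zero _ _ _ hPS), ?(proj_idem _ _ _ hPS). vec_ext. }
      rewrite Cf.
      assert (Bnd := bound_lemma H Ssp Tsp S T hPS hPT k hk Ppos y Py). unfold Aop in Bnd. fold z in Bnd.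
      assert (Ty2 : hinner (T y) (T y) = hinner z y) by (unfold z; symmetry; apply (A_pos _ _ _ _ _ hPS hPT y Py)).
      assert (Tz2 : hinner (T z) (T z) = hinner (S (T z)) z) by (symmetry; apply (A_pos _ _ _ _ _ hPS hPT z Pz)).
      assert (nTy : hinner n (T y) = 0) by (rewrite <- (proj_sym _ _ _ hPT), Tn; apply inner_zero_l).
      assert (nz : hinner n z = 0).
      { unfold z. change (hinner n (Aop S T y) = 0). rewrite <- (A_sym _ _ _ _ _ hPS hPT n y Pn Py). unfold Aop. rewrite An. apply inner_zero_l. }
      assert (Vp := proj_pyth _ _ _ hPS (T z)).
      unfold fh. rewrite Sfe. inner_simpl. inner_simpl_in Vp.
      rewrite (hinner_sym _ (T y) n), nTy, (hinner_sym _ z n), nz, Ty2.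
      rewrite (hinner_sym _ (T z) (S (T z))) in *.
      replace (cos tmax ^ 4) with (k * k) by (unfold k; ring).
      assert (0 < k * k) by nra.
      assert (hinner z y - hinner z z <= (hinner (S (T z)) z - hinner (S (T z)) (S (T z))) / (k * k)).
      { apply (Rmult_le_reg_l (k * k)); auto. replace (k * k * ((hinner (S (T z)) z - hinner (S (T z)) (S (T z))) / (k * k))) with (hinner (S (T z)) z - hinner (S (T z)) (S (T z))) by (field; lra).
        lra. }
      assert (E : hinner (S (T z)) (T z) - hinner (S (T z)) (S (T z)) - (hinner (T z) (S (T z)) - hinner (S (T z)) (S (T z))) = 0).
      { rewrite (hinner_sym _ (T z) (S (T z))). ring. }
      unfold Rdiv in *. 
      assert (Hc : hinner (S (T z)) (S (T z)) - hinner (S (T z)) (T z) - (hinner (S (T z)) (T z) - hinner (T z) (T z))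
                 = hinner (S (T z)) z - hinner (S (T z)) (S (T z))).
      { assert (hinner (S (T z)) (T z) = hinner (S (T z)) (S (T z))) by (symmetry; apply (proj_sq _ _ _ hPS)).
        lra. }
      rewrite Hc. lra. }
  split; auto.
  intro f. destruct (Main f) as [fn [[Hc _] _]]. eauto.
Qed.
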